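(* Let $p\ge1$ and let $n\ge1$ be a natural number whose Zeckendorf representation is $[n]=\varepsilon_p\varepsilon_{p-1}\cdots\varepsilon_1$ with $\varepsilon_p=1$. Then for every word $u\in(\vartheta_1^p(b))^{\varepsilon_p}(\vartheta_1^{p-1}(b))^{\varepsilon_{p-1}}\cdots(\vartheta_1(b))^{\varepsilon_1}$, at least one of the words $uab$ or $uba$ is a prefix of some word in $\vartheta_1^{p+1}(a)$.
   Context: Fibonacci numbers: $f_0=f_1=1$, $f_n=f_{n-1}+f_{n-2}$ for $n\ge2$. Every positive integer $n$ has a unique Zeckendorf representation $n=\sum_{i=1}^r\varepsilon_if_i$ with $\varepsilon_i\in\{0,1\}$, $\varepsilon_r=1$ and $\varepsilon_i\varepsilon_{i+1}=0$; one writes $[n]=\varepsilon_r\cdots\varepsilon_1$. The random Fibonacci substitution is $\vartheta_1\colon a\mapsto\{ab,ba\},\ b\mapsto\{a\}$, extended to words by set concatenation ($AB=\{xy\mid x\in A,y\in B\}$) and to sets by unions; $\vartheta_1^p$ is its $p$-fold iterate. For a set $A$ of words, $A^0=\{\text{empty word}\}$ and $A^{k}=A\cdots A$ ($k$ factors). Note $|\vartheta_1^i(b)|=f_i$ for all words in that set. *)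

(* Defs.v *)
From HB Require Import structures.
From mathcomp Require Import all_boot.
Set Implicit Arguments. Unset Strict Implicit. Unset Printing Implicit Defensive.

Fixpoint fib (n : nat) : nat :=
  match n with
  | 0 | 1 => 1
  | (m.+1 as k).+1 => fib k + fib m
  end.

Inductive letter := la | lb.

Definition letter_to_bool (x : letter) : bool := if x is la then true else false.
Definition bool_to_letter (x : bool) : letter := if x then la else lb.
Lemma letter_boolK : cancel letter_to_bool bool_to_letter.
Proof. by case. Qed.
HB.instance Definition _ := Equality.copy letter (can_type letter_boolK).

Definition word := seq letter.
(* finite sets of words, represented by (possibly repeating) lists; membership via \in *)
Definition wset := seq word.

Definition setcat (A B : wset) : wset := [seq x ++ y | x <- A, y <- B].

Definition setpow (A : wset) (k : nat) : wset := iter k (setcat A) [:: [::]].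

Definition theta_letter (c : letter) : wset :=
  match c with
  | la => [:: [:: la; lb]; [:: lb; la]]
  | lb => [:: [:: la]]
  end.

Definition theta_word (w : word) : wset :=
  foldr (fun c S => setcat (theta_letter c) S) [:: [::]] w.

Definition theta_set (S : wset) : wset := flatten [seq theta_word w | w <- S].

Definition thetap (p : nat) (c : letter) : wset := iter p theta_set [:: [:: c]].

Definition zeckendorf (n p : nat) (eps : nat -> bool) : Prop :=
  [/\ n = \sum_(1 <= i < p.+1) eps i * fib i,
      eps p &
      forall i, 1 <= i < p -> ~~ (eps i && eps i.+1)].

Fixpoint zprod (eps : nat -> bool) (k : nat) : wset :=
  match k with
  | 0 => [:: [::]]
  | k'.+1 => setcat (setpow (thetap k lb) (eps k)) (zprod eps k')
  end.

(* Main.v *)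
Require Import Defs.
From mathcomp Require Import all_boot.

Lemma setcatP (A B : wset) z :
  reflect (exists x y, [/\ x \in A, y \in B & z = x ++ y]) (z \in setcat A B).
Proof.
apply: (iffP allpairsP) => [[[x y] /= [hx hy ->]]|[x [y [hx hy ->]]]].
  by exists x, y.
by exists (x, y).
Qed.

Lemma setcat_f (A B : wset) x y : x \in A -> y \in B -> x ++ y \in setcat A B.
Proof. move=> hx hy; apply/setcatP; by exists x, y. Qed.

Lemma theta_word_cat w1 w2 x y :
  x \in theta_word w1 -> y \in theta_word w2 -> x ++ y \in theta_word (w1 ++ w2).
Proof.
elim: w1 x => [|c w1 IH] x /=.
  by rewrite inE => /eqP ->.
move=> /setcatP [x1 [x2 [h1 h2 ->]]] hy.
rewrite -catA; apply: setcat_f => //; exact: IH.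
Qed.

Lemma theta_word_ne w : exists x, x \in theta_word w.
Proof.
elim: w => [|c w [x hx]] /=; first by exists [::]; rewrite inE.
case: c.
  exists ([:: la; lb] ++ x); apply: setcat_f => //; by rewrite inE eqxx.
exists ([:: la] ++ x); apply: setcat_f => //; by rewrite inE eqxx.
Qed.

Lemma theta_setP S x :
  reflect (exists2 w, w \in S & x \in theta_word w) (x \in theta_set S).
Proof. exact: flatten_mapP. Qed.

Lemma iter_cat k w1 w2 x y :
  x \in iter k theta_set [:: w1] -> y \in iter k theta_set [:: w2] ->
  x ++ y \in iter k theta_set [:: w1 ++ w2].
Proof.
elim: k x y => [|k IH] x y.
  by rewrite /= !inE => /eqP -> /eqP ->.
rewrite !iterS; move=> /theta_setP [x0 hx0 hx] /theta_setP [y0 hy0 hy].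
apply/theta_setP; exists (x0 ++ y0); first exact: IH.
exact: theta_word_cat.
Qed.

Lemma iter_ne k w : exists x, x \in iter k theta_set [:: w].
Proof.
elim: k => [|k [x hx]]; first by exists w; rewrite inE.
rewrite iterS.
have [y hy] := theta_word_ne x.
exists y; apply/theta_setP; by exists x.
Qed.

Lemma iter_mono k (S T : wset) :
  {subset S <= T} -> {subset iter k theta_set S <= iter k theta_set T}.
Proof.
move=> hST; elim: k => [|k IH] //= x.
move=> /theta_setP [w hw hx]; apply/theta_setP; exists w => //.
exact: IH.
Qed.

Lemma thetaS_a k x : x \in iter k theta_set [:: [:: la; lb]] -> x \in thetap k.+1 la.
Proof.
rewrite /thetap iterSr; apply: iter_mono => z; rewrite inE => /eqP ->.
by rewrite /= inE eqxx.
Qed.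

Lemma thetaS_a' k x : x \in iter k theta_set [:: [:: lb; la]] -> x \in thetap k.+1 la.
Proof.
rewrite /thetap iterSr; apply: iter_mono => z; rewrite inE => /eqP ->.
by rewrite /= !inE eqxx orbT.
Qed.

Lemma thetap_b k x : x \in thetap k.+1 lb -> x \in thetap k la.
Proof. by rewrite /thetap iterSr. Qed.

Lemma AB k x y : x \in thetap k la -> y \in thetap k lb -> x ++ y \in thetap k.+1 la.
Proof. move=> hx hy; apply: thetaS_a; move: hx hy; rewrite /thetap => hx hy.
have := @iter_cat k [:: la] [:: lb] x y hx hy. by []. Qed.

Lemma BA k x y : x \in thetap k lb -> y \in thetap k la -> x ++ y \in thetap k.+1 la.
Proof. move=> hx hy; apply: thetaS_a'; move: hx hy; rewrite /thetap => hx hy.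
have := @iter_cat k [:: lb] [:: la] x y hx hy. by []. Qed.

Lemma keyQ (eps : nat -> bool) m : 1 <= m -> forall j, j < m ->
  forall u, u \in zprod eps j ->
  exists2 v, v \in thetap m la &
    prefix (u ++ [:: la; lb]) v || prefix (u ++ [:: lb; la]) v.
Proof.
elim: m => [//|m IH] _ j hj u hu.
case: m IH hj => [|m] IH hj.
  case: j hj hu => [|j] // _.
  rewrite /= inE => /eqP ->.
  exists [:: la; lb]; last by [].
  by [].
have IH' := IH isT.
have ext : forall u', (exists2 v, v \in thetap m.+1 la &
    prefix (u' ++ [:: la; lb]) v || prefix (u' ++ [:: lb; la]) v) ->
    exists2 v, v \in thetap m.+2 la &
    prefix (u' ++ [:: la; lb]) v || prefix (u' ++ [:: lb; la]) v.
  move=> u' [v hv hp]; have [y hy] := iter_ne m.+1 [:: lb].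
  exists (v ++ y); first exact: AB.
  by case/orP: hp => hp; [rewrite (prefix_catl y hp) | rewrite (prefix_catl y hp) orbT].
rewrite ltnS leq_eqVlt in hj; case/orP: hj => [/eqP Ej|hj]; last first.
  exact: (ext u (IH' j hj u hu)).
subst j; move: hu => /= /setcatP [x [u' [hx hu' ->]]].
case E: (eps m.+1) hx => /=.
  move=> /setcatP [x0 [e [hx0]]]; rewrite inE => /eqP -> ->; rewrite cats0.
  have [v hv hp] := IH' m (ltnSn m) u' hu'.
  exists (x0 ++ v); first exact: (@BA m.+1 x0 v hx0 hv).
  by rewrite -!catA !prefix_catr ?eqxx.
rewrite inE => /eqP ->; exact: (ext u' (IH' m (ltnSn m) u' hu')).
Qed.

Theorem mainTheorem4 (p n : nat) (eps : nat -> bool) :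
  1 <= p -> 1 <= n -> zeckendorf n p eps ->
  forall u, u \in zprod eps p ->
  exists2 v, v \in thetap p.+1 la &
    prefix (u ++ [:: la; lb]) v || prefix (u ++ [:: lb; la]) v.
Proof.
move=> _ _ _ u hu; exact: (@keyQ eps p.+1 isT p (ltnSn p) u hu).
Qed.
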